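(* Let $n\geq 2$. Let $SP^n(\mathbb{C})$ be the $n$-th symmetric power of $\mathbb{C}$ and $\Delta=\{\{z,\dots,z\}\mid z\in\mathbb{C}\}\subset SP^n(\mathbb{C})$ its diagonal, with $\mathbb{C}\rtimes\mathbb{C}^*$ acting on $SP^n(\mathbb{C})-\Delta$ by $z\mapsto\lambda z+\mu$ on each point. For $\mathbf{z}=\{z_1,\dots,z_n\}$ let $B(\mathbf{z})=(z_1+\dots+z_n)/n$ and let $a_0,\dots,a_{n-2}$ be the coefficients of $z^0,\dots,z^{n-2}$ in the monic polynomial $(z-z_1+B(\mathbf{z}))\cdots(z-z_n+B(\mathbf{z}))$. Then \[ \psi:\frac{SP^n(\mathbb{C})-\Delta}{\mathbb{C}\rtimes\mathbb{C}^*}\to\mathbb{P}(n,n-1,\dots,2),\qquad [\{z_1,\dots,z_n\}]\mapsto[a_0:\dots:a_{n-2}] \] is a well-defined homeomorphism.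
   Context: For positive integers $b_0,\dots,b_m$, the weighted projective space $\mathbb{P}(b_0,\dots,b_m)$ is $(\mathbb{C}^{m+1}-\{0\})/\sim$ where $(z_0,\dots,z_m)\sim(t^{b_0}z_0,\dots,t^{b_m}z_m)$ for $t\in\mathbb{C}^*$. Thus in $\mathbb{P}(n,n-1,\dots,2)$ the coordinate $a_k$ has weight $n-k$. *)

(* Defs.v *)
From HB Require Import structures.
From mathcomp Require Import all_boot all_order all_algebra perm.
From mathcomp Require Import generic_quotient.
From mathcomp Require Import complex.
From mathcomp Require Import all_classical all_reals all_analysis.
From mathcomp Require Import ring.
Import GRing.Theory Num.Theory numFieldTopology.Exports.

Set Implicit Arguments.
Unset Strict Implicit.
Unset Printing Implicit Defensive.

Local Open Scope ring_scope.
Local Open Scope classical_set_scope.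
Local Open Scope quotient_scope.

Definition Cplx (R : realType) : Type := R[i].
HB.instance Definition _ (R : realType) := Num.ClosedField.on (Cplx R).
HB.instance Definition _ (R : realType) :=
  PseudoPointedMetric.copy (Cplx R) (R[i])^o.

Section PropQuot.
Variables (T : choiceType) (r : T -> T -> Prop).
Hypotheses (r1 : forall x, r x x) (r2 : forall x y, r x y -> r y x)
           (r3 : forall x y z, r x y -> r y z -> r x z).

Definition brel : rel T := fun x y => `[< r x y >].

Lemma brel_refl : reflexive brel.
Proof. by move=> x; apply/asboolP. Qed.

Lemma brel_sym : symmetric brel.
Proof.
by move=> x y; apply/asboolP/asboolP => /r2.
Qed.

Lemma brel_trans : transitive brel.
Proof.
by move=> y x z /asboolP hxy /asboolP hyz; apply/asboolP; apply: r3 hyz.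
Qed.

Definition brel_equiv : equiv_rel T := EquivRel brel brel_refl brel_sym brel_trans.
End PropQuot.

Section SymPow.
Variables (R : realType) (n : nat).
Local Notation C := (Cplx R).

Definition permrel (z w : 'rV[C]_n) : Prop :=
  exists s : 'S_n, w = \row_i z 0 (s i).

Lemma permrel_refl z : permrel z z.
Proof. by exists 1%g; apply/matrixP => i j; rewrite !mxE perm1 ord1. Qed.

Lemma permrel_sym z w : permrel z w -> permrel w z.
Proof.
move=> [s ->]; exists (s^-1)%g; apply/matrixP => i j.
by rewrite !mxE permKV ord1.
Qed.

Lemma permrel_trans z w v : permrel z w -> permrel w v -> permrel z v.
Proof.
move=> [s ->] [t ->]; exists (t * s)%g; apply/matrixP => i j.
by rewrite !mxE permM.
Qed.

Definition permeq := brel_equiv permrel_refl permrel_sym permrel_trans.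

Definition SP : topologicalType := quotient_topology {eq_quot permeq}.

Definition piSP (z : 'rV[C]_n) : SP := \pi_({eq_quot permeq}) z.

Definition SPdiag : set SP := [set p | exists c : C, p = piSP (const_mx c)].

Definition SPo : topologicalType := set_type (~` SPdiag).

Definition affrow (l m : C) (z : 'rV[C]_n) : 'rV[C]_n := l *: z + const_mx m.

Definition actSP (l m : C) (p : SP) : SP := piSP (affrow l m (repr p)).

Lemma piSP_eq z w : piSP z = piSP w <-> permrel z w.
Proof.
split => h.
  by move/eqquotP: h => /asboolP.
by apply/eqquotP; apply/asboolP.
Qed.

Lemma actSP_pi l m z : actSP l m (piSP z) = piSP (affrow l m z).
Proof.
rewrite /actSP; apply/piSP_eq.
have : piSP (repr (piSP z)) = piSP z by rewrite /piSP reprK.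
move: (repr (piSP z)) => r /piSP_eq [s ->]; exists s.
by apply/matrixP => i j; rewrite !mxE.
Qed.

Lemma piSP_surj (p : SP) : exists z, p = piSP z.
Proof. by exists (repr p); rewrite /piSP reprK. Qed.

Definition orbrel (p q : SPo) : Prop :=
  exists l m : C, l != 0 /\ val q = actSP l m (val p).

Lemma orbrel_refl p : orbrel p p.
Proof.
exists 1, 0; split; first exact: oner_neq0.
have [z hz] := piSP_surj (val p); rewrite hz actSP_pi; congr piSP.
by apply/matrixP => i j; rewrite !mxE; ring.
Qed.

Lemma orbrel_sym p q : orbrel p q -> orbrel q p.
Proof.
move=> [l [m [l0 h]]]; exists l^-1, (- m / l); split; first by rewrite invr_eq0.
have [z hz] := piSP_surj (val p); rewrite h hz !actSP_pi; congr piSP.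
by apply/matrixP => i j; rewrite !mxE; field.
Qed.

Lemma orbrel_trans p q r : orbrel p q -> orbrel q r -> orbrel p r.
Proof.
move=> [l [m [l0 h]]] [l' [m' [l0' h']]]; exists (l' * l), (l' * m + m').
split; first by rewrite mulf_neq0.
have [z hz] := piSP_surj (val p); rewrite h' h hz !actSP_pi; congr piSP.
by apply/matrixP => i j; rewrite !mxE; ring.
Qed.

Definition orbeq := brel_equiv orbrel_refl orbrel_sym orbrel_trans.

Definition ConfQuot : topologicalType := quotient_topology {eq_quot orbeq}.

Definition piConf (p : SPo) : ConfQuot := \pi_({eq_quot orbeq}) p.

Definition baryc (z : 'rV[C]_n) : C := (\sum_i z 0 i) / n%:R.

Definition centred_poly (z : 'rV[C]_n) : {poly C} :=
  \prod_(i < n) ('X - (z 0 i - baryc z)%:P).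

Definition coeffs_a (z : 'rV[C]_n) : 'rV[C]_(n.-1) :=
  \row_(k < n.-1) (centred_poly z)`_k.

End SymPow.

(* Weighted projective space P(n, n-1, ..., 2): coordinate a_k (k < n-1) *)
(* has weight n - k.                                                    *)
Section WProj.
Variables (R : realType) (n : nat).
Local Notation C := (Cplx R).

Definition wact (t : C) (a : 'rV[C]_(n.-1)) : 'rV[C]_(n.-1) :=
  \row_(k < n.-1) (t ^+ (n - k) * a 0 k).

Definition Cm0 : topologicalType := set_type (~` [set (0 : 'rV[C]_(n.-1))]).

Definition wrel (a b : Cm0) : Prop := exists t : C, t != 0 /\ val b = wact t (val a).

Lemma wrel_refl a : wrel a a.
Proof.
exists 1; split; first exact: oner_neq0.
by apply/matrixP => i j; rewrite !mxE ord1 expr1n mul1r.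
Qed.

Lemma wrel_sym a b : wrel a b -> wrel b a.
Proof.
move=> [t [t0 h]]; exists t^-1; split; first by rewrite invr_eq0.
rewrite h; apply/matrixP => i j; rewrite !mxE ord1 exprVn mulrA mulVf ?mul1r //.
exact: expf_neq0.
Qed.

Lemma wrel_trans a b c : wrel a b -> wrel b c -> wrel a c.
Proof.
move=> [t [t0 h]] [u [u0 h']]; exists (u * t); split; first by rewrite mulf_neq0.
rewrite h' h; by apply/matrixP => i j; rewrite !mxE exprMn mulrA.
Qed.

Definition weq := brel_equiv wrel_refl wrel_sym wrel_trans.

Definition WP : topologicalType := quotient_topology {eq_quot weq}.

Definition piWP (a : Cm0) : WP := \pi_({eq_quot weq}) a.

End WProj.

Definition is_homeomorphism (X Y : topologicalType) (f : X -> Y) : Prop :=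
  continuous f /\ exists g : Y -> X, [/\ continuous g, cancel f g & cancel g f].

(* Main.v *)
Require Import Defs.
From HB Require Import structures.
From mathcomp Require Import all_boot all_order all_algebra perm.
From mathcomp Require Import generic_quotient complex.
From mathcomp Require Import all_classical all_reals all_analysis.
From mathcomp Require Import ring zify lra.
Import GRing.Theory Num.Theory numFieldTopology.Exports.
Import Order.TTheory.
Local Open Scope ring_scope.
Local Open Scope classical_set_scope.
Set Implicit Arguments.
Unset Strict Implicit.
Unset Printing Implicit Defensive.

Section Alg.
Variable R : realType.
Local Notation C := (Cplx R).

Definition prodX n (z : 'rV[C]_n) : {poly C} := \prod_(i < n) ('X - (z 0 i)%:P).

Definition tz n (z : 'rV[C]_n) : n.-tuple C := [tuple z 0 i | i < n].

Lemma prodX_seq n (z : 'rV[C]_n) : prodX z = \prod_(x <- tz z) ('X - x%:P).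
Proof. by rewrite /prodX /tz /= big_map /index_enum unlock -enumT. Qed.

Lemma size_prodF n (f : 'I_n -> C) : size (\prod_(i < n) ('X - (f i)%:P)) = n.+1.
Proof. by rewrite size_prod_XsubC /index_enum unlock -enumT size_enum_ord. Qed.

Lemma monic_prodF n (f : 'I_n -> C) : \prod_(i < n) ('X - (f i)%:P) \is monic.
Proof. exact: monic_prod_XsubC. Qed.

Lemma coefMXsubC (Q : {poly C}) c k :
  (Q * ('X - c%:P))`_k = (if k is k'.+1 then Q`_k' else 0) - Q`_k * c.
Proof. by rewrite mulrBr coefB coefMX coefMC; case: k. Qed.

Lemma coef_prod_scale n (f : 'I_n -> C) l k :
  (\prod_(i < n) ('X - (l * f i)%:P))`_k = l ^+ (n - k) * (\prod_(i < n) ('X - (f i)%:P))`_k.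
Proof.
elim: n f k => [|n IH] f k.
  by rewrite !big_ord0 sub0n expr0 mul1r.
rewrite !big_ord_recr /= !coefMXsubC.
case: k => [|k]; first by rewrite !IH subn0 exprS; ring.
rewrite !IH subSS.
case: (ltnP k n) => hk.
  rewrite -(subnSK hk) exprS; ring.
have -> : (\prod_(i < n) ('X - (f (widen_ord (leqnSn n) i))%:P))`_k.+1 = 0.
  by rewrite nth_default // size_prodF.
have -> : (n - k.+1 = 0)%N by apply/eqP; rewrite subn_eq0 ltnW.
have -> : (n - k = 0)%N by apply/eqP; rewrite subn_eq0.
by rewrite !expr0; ring.
Qed.


Lemma prodX_perm n (z w : 'rV[C]_n) : prodX z = prodX w -> permrel z w.
Proof.
rewrite !prodX_seq => /prod_XsubC_eq hp.
have /tuple_permP [p hpw] : perm_eq (tz w) (tz z) by rewrite perm_sym.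
exists p; apply/matrixP => i j; rewrite ord1 mxE.
have /val_inj ht := hpw.
have := congr1 (fun t => tnth t j) ht.
by rewrite /tz !tnth_mktuple.
Qed.

Lemma permrel_prodX n (z w : 'rV[C]_n) : permrel z w -> prodX z = prodX w.
Proof.
case=> s ->; rewrite /prodX [LHS](reindex_inj (@perm_inj _ s)) /=.
by apply: eq_bigr => i _; rewrite mxE.
Qed.

Lemma permrel_sum n (z w : 'rV[C]_n) : permrel z w -> \sum_i w 0 i = \sum_i z 0 i.
Proof.
case=> s ->; rewrite [RHS](reindex_inj (@perm_inj _ s)) /=.
by apply: eq_bigr => i _; rewrite mxE.
Qed.

Lemma natr_neq0 n : (0 < n)%N -> (n%:R : C) != 0.
Proof. by move=> hn; rewrite pnatr_eq0 -lt0n. Qed.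

Definition cen n (z : 'rV[C]_n) : 'rV[C]_n := \row_i (z 0 i - baryc z).

Lemma centred_prodX n (z : 'rV[C]_n) : centred_poly z = prodX (cen z).
Proof. by rewrite /centred_poly /prodX; apply: eq_bigr => i _; rewrite mxE. Qed.

Lemma sum_cen n (z : 'rV[C]_n) : (0 < n)%N -> \sum_i cen z 0 i = 0.
Proof.
move=> hn; rewrite /cen; under eq_bigr do rewrite mxE.
rewrite sumrB sumr_const card_ord /baryc -[_ *+ n]mulr_natr divfK ?subrr //.
exact: natr_neq0.
Qed.

Lemma baryc_perm n (z w : 'rV[C]_n) : permrel z w -> baryc w = baryc z.
Proof. by move=> h; rewrite /baryc (permrel_sum h). Qed.

Lemma cen_perm n (z w : 'rV[C]_n) : permrel z w -> permrel (cen z) (cen w).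
Proof.
move=> h; have hb := baryc_perm h; case: h => s hs; exists s.
by apply/matrixP => i j; rewrite !mxE hb hs mxE.
Qed.

Lemma coeffs_perm n (z w : 'rV[C]_n) : permrel z w -> coeffs_a w = coeffs_a z.
Proof.
move=> h; rewrite /coeffs_a !centred_prodX (permrel_prodX (cen_perm h)).
by [].
Qed.

Lemma baryc_aff n l m (z : 'rV[C]_n) : (0 < n)%N ->
  baryc (affrow l m z) = l * baryc z + m.
Proof.
move=> hn; rewrite /baryc /affrow.
under eq_bigr do rewrite !mxE.
rewrite big_split /= -mulr_sumr sumr_const card_ord.
rewrite -[_ *+ n]mulr_natr mulrDl -mulrA mulfK //; exact: natr_neq0.
Qed.

Lemma cen_aff n l m (z : 'rV[C]_n) : (0 < n)%N -> cen (affrow l m z) = l *: cen z.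
Proof.
move=> hn; apply/matrixP => i j; rewrite !mxE baryc_aff //.
ring.
Qed.

Lemma prodX_scale n l (z : 'rV[C]_n) k :
  (prodX (l *: z))`_k = l ^+ (n - k) * (prodX z)`_k.
Proof.
rewrite /prodX -coef_prod_scale.
by under eq_bigr do rewrite mxE.
Qed.

Lemma coeffs_aff n l m (z : 'rV[C]_n) : (0 < n)%N ->
  coeffs_a (affrow l m z) = wact l (coeffs_a z).
Proof.
move=> hn; apply/matrixP => i j; rewrite !mxE !centred_prodX cen_aff //.
by rewrite prodX_scale.
Qed.

Lemma prodX_coefPn n (z : 'rV[C]_n.+1) : (prodX z)`_n = - \sum_i z 0 i.
Proof.
rewrite prodX_seq.
have := @coefPn_prod_XsubC _ (tz z); rewrite size_tuple /= => ->//.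
by rewrite /tz /= big_map /index_enum unlock -enumT.
Qed.

End Alg.

Section Fixed.
Variables (R : realType) (m : nat).
Local Notation C := (Cplx R).
Local Notation n := m.+2.

Definition Pa (a : 'rV[C]_m.+1) : {poly C} := 'X^n + \poly_(k < m.+1) a 0 (inord k).

Lemma Pa_coefS a (k : 'I_m.+1) : (Pa a)`_k = a 0 k.
Proof.
rewrite coefD coefXn coef_poly ltn_ord inord_val.
have -> : (k == n :> nat) = false by apply/negbTE; rewrite neq_ltn ltnS ltnW.
by rewrite add0r.
Qed.

Lemma Pa_coef_ge a j : (m.+1 <= j)%N -> (Pa a)`_j = (j == n)%:R.
Proof. by move=> hj; rewrite coefD coefXn coef_poly ltnNge hj addr0. Qed.

Lemma Pa_size a : size (Pa a) = n.+1.
Proof.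
rewrite size_polyDl; first exact: size_polyXn.
by apply: leq_ltn_trans (size_poly _ _) _; have -> := @size_polyXn C n.
Qed.

Lemma Pa_monic a : Pa a \is monic.
Proof.
rewrite monicE lead_coefDl ?lead_coefXn //.
by apply: leq_ltn_trans (size_poly _ _) _; rewrite size_polyXn.
Qed.

Lemma Pa_eq (P : {poly C}) : P \is monic -> size P = n.+1 -> P`_m.+1 = 0 ->
  P = Pa (\row_(k < m.+1) P`_k).
Proof.
move=> mP sP P1; apply/polyP => j.
case: (ltnP j m.+1) => hj.
  by rewrite (Pa_coefS _ (Ordinal hj)) mxE.
rewrite Pa_coef_ge //.
case: (ltngtP j n) => hjn.
- have -> : j = m.+1 by lia.
  by rewrite P1.
- by rewrite nth_default ?sP.
- by rewrite hjn -(monicP mP) lead_coefE sP.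
Qed.

Lemma centred_Pa (z : 'rV[C]_n) : centred_poly z = Pa (coeffs_a z).
Proof.
rewrite /coeffs_a centred_prodX; apply: Pa_eq.
- exact: monic_prodF.
- exact: size_prodF.
- by rewrite prodX_coefPn sum_cen ?oppr0.
Qed.

Lemma Pa0 : Pa 0 = 'X^n.
Proof.
apply/polyP => j; case: (ltnP j m.+1) => hj.
  by rewrite (Pa_coefS _ (Ordinal hj)) mxE coefXn (_ : (j == n) = false) //; apply/negbTE; lia.
by rewrite Pa_coef_ge // coefXn.
Qed.

Lemma coeffs_nz (z : 'rV[C]_n) :
  piSP z \in ~` @SPdiag R n -> coeffs_a z \in ~` [set 0].
Proof.
move=> hz; apply: mem_set => /= ha0.
apply: (set_mem hz); exists (baryc z); congr piSP.
have hP : prodX (cen z) = 'X^n by rewrite -centred_prodX centred_Pa ha0 Pa0.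
apply/matrixP => i j; rewrite ord1 mxE.
have : (prodX (cen z)).[cen z 0 j] = 0.
  by rewrite /prodX horner_prod (bigD1 j) //= hornerXsubC subrr mul0r.
rewrite hP hornerXn => /eqP; rewrite expf_eq0 /= mxE subr_eq0 => /eqP.
by [].
Qed.

End Fixed.

Section Fixed2.
Variables (R : realType) (m : nat).
Local Notation C := (Cplx R).
Local Notation n := m.+2.

Definition rs (a : 'rV[C]_m.+1) : seq C := sval (closed_field_poly_normal (Pa a)).

Lemma rs_spec a : Pa a = \prod_(x <- rs a) ('X - x%:P).
Proof.
rewrite /rs; case: closed_field_poly_normal => r /= hr.
by rewrite {1}hr (monicP (Pa_monic a)) scale1r.
Qed.

Lemma size_rs a : size (rs a) = n.
Proof. by have := congr1 (fun p : {poly C} => size p) (rs_spec a); rewrite Pa_size size_prod_XsubC => -[]. Qed.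

Definition rt (a : 'rV[C]_m.+1) : 'rV[C]_n := \row_(i < n) (rs a)`_i.

Lemma tz_rt a : tval (tz (rt a)) = rs a.
Proof.
rewrite /tz /= -[RHS](mkseq_nth 0) size_rs /mkseq -val_enum_ord -map_comp.
by apply: eq_map => i /=; rewrite mxE.
Qed.

Lemma prodX_rt a : prodX (rt a) = Pa a.
Proof. by rewrite prodX_seq tz_rt -rs_spec. Qed.

Lemma baryc_rt a : baryc (rt a) = 0.
Proof.
have := prodX_coefPn (rt a); rewrite prodX_rt (Pa_coef_ge _ (leqnn _)).
rewrite (_ : (m.+1 == n) = false); last by apply/negbTE; lia.
by move/eqP; rewrite eq_sym oppr_eq0 /baryc => /eqP ->; rewrite mul0r.
Qed.

Lemma coeffs_rt a : coeffs_a (rt a) = a.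
Proof.
apply/matrixP => i j; rewrite ord1 mxE centred_prodX.
have -> : cen (rt a) = rt a by apply/matrixP => i' j'; rewrite [LHS]mxE baryc_rt subr0 ord1.
by rewrite prodX_rt Pa_coefS.
Qed.

Lemma coeffs_const (c : C) : coeffs_a (const_mx c : 'rV[C]_n) = 0.
Proof.
have hb : baryc (const_mx c : 'rV[C]_n) = c.
  rewrite /baryc; under eq_bigr do rewrite mxE.
  by rewrite sumr_const card_ord -[c *+ _]mulr_natr mulfK // natr_neq0.
have hc : cen (const_mx c : 'rV[C]_n) = 0 by apply/matrixP => i j; rewrite !mxE hb subrr.
have hp : prodX (0 : 'rV[C]_n) = 'X^n.
  rewrite /prodX; under eq_bigr do rewrite mxE subr0.
  by rewrite prodr_const card_ord.
apply/matrixP => i j; rewrite !mxE centred_prodX hc hp coefXn.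
by rewrite (_ : (j == n :> nat) = false) //; apply/negbTE; have := ltn_ord j; lia.
Qed.

Lemma rt_nd (a : 'rV[C]_m.+1) : a \in ~` [set 0] -> piSP (rt a) \in ~` @SPdiag R n.
Proof.
move=> /set_mem ha; apply: mem_set => -[c /piSP_eq hc].
apply: ha => /=; rewrite -(coeffs_rt a) -(coeffs_const c).
exact: coeffs_perm (permrel_sym hc).
Qed.

Lemma Pa_wact (t : C) (a : 'rV[C]_m.+1) k : (Pa (@wact R n t a))`_k = t ^+ (n - k) * (Pa a)`_k.
Proof.
case: (ltnP k m.+1) => hk.
  by rewrite !(Pa_coefS _ (Ordinal hk)) mxE.
rewrite !Pa_coef_ge //; case: eqP => [->|]; first by rewrite subnn expr0 mulr1.
by rewrite mulr0.
Qed.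

Lemma rt_wact (t : C) (a : 'rV[C]_m.+1) : permrel (t *: rt a) (rt (@wact R n t a)).
Proof.
apply: prodX_perm; apply/polyP => k.
by rewrite prodX_scale !prodX_rt Pa_wact.
Qed.

Lemma affrow0 l (z : 'rV[C]_n) : affrow l 0 z = l *: z.
Proof. by apply/matrixP => i j; rewrite /affrow !mxE addr0. Qed.

Lemma cen_affrow (z : 'rV[C]_n) : cen z = affrow 1 (- baryc z) z.
Proof. by apply/matrixP => i j; rewrite /affrow !mxE mul1r ord1. Qed.

Lemma rt_coeffs (z : 'rV[C]_n) : permrel (cen z) (rt (coeffs_a z)).
Proof. by apply: prodX_perm; rewrite prodX_rt -centred_Pa centred_prodX. Qed.

End Fixed2.

Lemma exist_eq {T : Type} (P : T -> Prop) x y (hx : P x) (hy : P y) :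
  x = y -> exist P x hx = exist P y hy.
Proof. by move=> e; subst; congr exist; apply: Prop_irrelevance. Qed.

Section Fixed3.
Variables (R : realType) (m : nat).
Local Notation C := (Cplx R).
Local Notation n := m.+2.

Lemma reprSP (x : SP R n) : piSP (repr x) = x.
Proof. by rewrite /piSP reprK. Qed.

Lemma repr_nd (p : SPo R n) : piSP (repr (val p)) \in ~` @SPdiag R n.
Proof. by rewrite reprSP; exact: (proj2_sig p). Qed.

Lemma piWP_eq (a b : Cm0 R n) : piWP a = piWP b <-> wrel a b.
Proof.
split => h; first by move/eqquotP: h => /asboolP.
by apply/eqquotP; apply/asboolP.
Qed.

Lemma piConf_eq (p q : SPo R n) : piConf p = piConf q <-> orbrel p q.
Proof.
split => h; first by move/eqquotP: h => /asboolP.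
by apply/eqquotP; apply/asboolP.
Qed.

Definition F (p : SPo R n) : WP R n :=
  piWP (exist _ (coeffs_a (repr (val p))) (coeffs_nz (repr_nd p))).

Lemma F_pi (z : 'rV[C]_n) hz ha :
  F (exist _ (piSP z) hz) = piWP (exist _ (coeffs_a z) ha).
Proof.
rewrite /F; congr piWP; apply: exist_eq => /=.
have /piSP_eq h : piSP (repr (piSP z)) = piSP z by rewrite reprSP.
exact: coeffs_perm (permrel_sym h).
Qed.

Lemma F_orb (p q : SPo R n) : orbrel p q -> F p = F q.
Proof.
move=> [l [m' [l0 hq]]]; apply/piWP_eq; exists l; split => //=.
have hp : val p = piSP (repr (val p)) by rewrite reprSP.
rewrite hp actSP_pi -(reprSP (val q)) in hq.
move/piSP_eq: hq => hq.
by rewrite -(coeffs_perm hq) coeffs_aff.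
Qed.

Definition psi (q : ConfQuot R n) : WP R n := F (repr q).

Lemma psi_pi p : psi (piConf p) = F p.
Proof.
apply: F_orb; apply/piConf_eq; rewrite /piConf reprK //.
Qed.

Definition g0 (a : Cm0 R n) : ConfQuot R n :=
  piConf (exist _ (piSP (rt (val a))) (rt_nd (proj2_sig a))).

Lemma g0_w (a b : Cm0 R n) : wrel a b -> g0 a = g0 b.
Proof.
move=> [t [t0 hb]]; apply/piConf_eq; exists t, 0; split => //=.
rewrite actSP_pi affrow0; apply/piSP_eq; rewrite hb.
exact: permrel_sym (rt_wact t (val a)).
Qed.

Definition g (w : WP R n) : ConfQuot R n := g0 (repr w).

Lemma g_pi a : g (piWP a) = g0 a.
Proof. by apply: g0_w; apply/piWP_eq; rewrite /piWP reprK. Qed.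

Lemma g_psi : cancel psi g.
Proof.
move=> q; rewrite -[q](reprK q) -/(piConf (repr q)) psi_pi.
set p := repr q.
have hz : piSP (repr (val p)) \in ~` @SPdiag R n := repr_nd p.
rewrite /F g_pi /g0; apply/piConf_eq; apply: orbrel_sym.
exists 1, (- baryc (repr (val p))); split; first exact: oner_neq0.
rewrite /=; set z := repr (val p); have hv : val p = piSP z by rewrite /z reprSP.
rewrite hv actSP_pi -cen_affrow; apply/piSP_eq.
exact: permrel_sym (rt_coeffs _).
Qed.

Lemma psi_g : cancel g psi.
Proof.
move=> w; rewrite /g /g0 psi_pi.
case E: (repr w) => [a ha] /=.
rewrite (F_pi _ (coeffs_nz (rt_nd ha))).
rewrite -[w]reprK E /piWP; apply: f_equal; apply: exist_eq; exact: coeffs_rt.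
Qed.

End Fixed3.

Section Topo.
Variable R : realType.
Local Notation C := (Cplx R).

Lemma cont_entry p q (i : 'I_p) (j : 'I_q) : continuous (fun M : 'M[C]_(p,q) => M i j).
Proof.
move=> M A /nbhs_ballP [e e0 hA].
apply/nbhs_ballP; exists e => // N hN; apply: hA; exact: hN.2.
Qed.

Lemma mx_cont (T : topologicalType) p q (f : T -> 'M[C]_(p,q)) :
  (forall i j, continuous (fun x => f x i j)) -> continuous f.
Proof.
move=> hf x A /nbhs_ballP [e e0 hA].
pose P (ij : 'I_p * 'I_q) (y : T) := ball (f x ij.1 ij.2) e (f y ij.1 ij.2).
have H : forall ij, nbhs x (P ij).
  move=> [i j].
  have h1 : nbhs (f x i j) (ball (f x i j) e) := @nbhsx_ballx _ C (f x i j) e e0.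
  have h2 := hf i j x _ h1.
  by move: h2; rewrite nbhs_simpl.
have H2 : nbhs x (fun y => forall ij, P ij y).
  exact: (@filter_forall T _ P (@nbhs T _ x) (nbhs_filter x) H).
apply: filterS H2 => y hy; apply: hA; split => // i j; exact: (hy (i, j)).
Qed.

Lemma contD (T : topologicalType) (f g : T -> C) :
  continuous f -> continuous g -> continuous (fun x => f x + g x).
Proof. by move=> cf cg x; exact: (@continuousD C C^o T f g x (cf x) (cg x)). Qed.

Lemma contM (T : topologicalType) (f g : T -> C) :
  continuous f -> continuous g -> continuous (fun x => f x * g x).
Proof. by move=> cf cg x; exact: (@continuousM C T f g x (cf x) (cg x)). Qed.

Lemma contN (T : topologicalType) (f : T -> C) :
  continuous f -> continuous (fun x => - f x).
Proof. by move=> cf x; exact: (@continuousN C C^o T f x (cf x)). Qed.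

Lemma contC (T : topologicalType) (c : C) : continuous (fun _ : T => c).
Proof. exact: cst_continuous. Qed.

Lemma sum_cont (T : topologicalType) n (f : 'I_n -> T -> C) :
  (forall i, continuous (f i)) -> continuous (fun x => \sum_(i < n) f i x).
Proof.
elim: n f => [|n IH] f hf.
  under eq_fun do rewrite big_ord0; exact: contC.
under eq_fun do rewrite big_ord_recr /=.
apply: contD; last exact: hf.
exact: (IH (fun i => f (widen_ord (leqnSn n) i))).
Qed.

Lemma coef_prod_cont (T : topologicalType) n (f : 'I_n -> T -> C) k :
  (forall i, continuous (f i)) ->
  continuous (fun x => (\prod_(i < n) ('X - (f i x)%:P))`_k).
Proof.
elim: n f k => [|n IH] f k hf.
  under eq_fun do rewrite big_ord0; exact: contC.
under eq_fun do rewrite big_ord_recr /= coefMXsubC.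
have hf' := fun i => hf (widen_ord (leqnSn n) i).
apply: contD; first by case: k => [|k]; [exact: contC | exact: IH].
apply: contN; apply: contM; [exact: IH | exact: hf].
Qed.


Lemma baryc_cont n : continuous (fun z : 'rV[C]_n => baryc z).
Proof.
rewrite /baryc; apply: contM; last exact: contC.
apply: sum_cont => i; exact: cont_entry.
Qed.

Lemma coeffs_cont n : continuous (fun z : 'rV[C]_n => coeffs_a z).
Proof.
apply: mx_cont => i j; under eq_fun do rewrite mxE.
rewrite /centred_poly.
suff : continuous (fun z : 'rV[C]_n => (\prod_(k < n) ('X - (z 0 k - baryc z)%:P))`_j) by [].
apply: (@coef_prod_cont 'rV[C]_n n (fun k z => z 0 k - baryc z) j) => k.
apply: contD; first exact: cont_entry.
apply: contN; exact: baryc_cont.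
Qed.

Lemma nz_ex p (a : 'rV[C]_p) : a != 0 -> exists j, a 0 j != 0.
Proof.
move=> ha; apply: contrapT => hn; move/eqP: ha; apply; apply/matrixP => i j.
rewrite ord1 mxE; apply/eqP; apply: contrapT => hij; apply: hn; exists j; exact/negP.
Qed.

Lemma nz_open p : open (~` [set (0 : 'rV[C]_p)]).
Proof.
rewrite openE => a /= ha.
have [j hj] : exists j, a 0 j != 0 by apply: nz_ex; apply/eqP.
apply/nbhs_ballP; exists `|a 0 j|; first by rewrite /= normr_gt0.
move=> b hb /= b0; have := hb.2 0 j; rewrite /ball /= b0 mxE subr0.
by rewrite ltxx.
Qed.

End Topo.

Section NR.
Variable R : realType.
Local Notation C := (Cplx R).
Local Open Scope complex_scope.
Local Open Scope ring_scope.

Definition nr (z : C) : R := complex.Re `|z|.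

Lemma nrE (z : C) : `|z| = (nr z)%:C.
Proof. by rewrite /nr normc_def. Qed.

Lemma nr_ge0 z : 0 <= nr z.
Proof. by rewrite -ler0c -nrE normr_ge0. Qed.

Lemma nrD x y : nr (x + y) <= nr x + nr y.
Proof. by rewrite -lecR rmorphD /= -!nrE ler_normD. Qed.

Lemma nrM x y : nr (x * y) = nr x * nr y.
Proof. by apply: (@complexI R); rewrite rmorphM /= -!nrE normrM. Qed.

Lemma nrN x : nr (- x) = nr x.
Proof. by apply: (@complexI R); rewrite -!nrE normrN. Qed.

Lemma nrB x y : nr (x - y) = nr (y - x).
Proof. by apply: (@complexI R); rewrite -!nrE distrC. Qed.

Lemma nrX x k : nr (x ^+ k) = nr x ^+ k.
Proof. by apply: (@complexI R); rewrite rmorphXn /= -!nrE normrX. Qed.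

Lemma nr0 : nr 0 = 0.
Proof. by apply: (@complexI R); rewrite -!nrE normr0. Qed.

Lemma nr_sum I (r : seq I) (F : I -> C) : nr (\sum_(i <- r) F i) <= \sum_(i <- r) nr (F i).
Proof.
rewrite -lecR rmorph_sum /= -nrE.
under [X in _ <= X]eq_bigr do rewrite -nrE.
exact: ler_norm_sum.
Qed.

Lemma nr_prod I (r : seq I) (F : I -> C) : nr (\prod_(i <- r) F i) = \prod_(i <- r) nr (F i).
Proof.
apply: (@complexI R); rewrite rmorph_prod /= -nrE.
under [X in _ = X]eq_bigr do rewrite -nrE.
exact: normr_prod.
Qed.

Lemma nr_lt x (r : R) : (`|x| < r%:C) = (nr x < r).
Proof. by rewrite nrE ltcR. Qed.

Lemma Dbound (x : C) (D : {poly C}) m (e M : R) :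
  (forall k, (m <= k)%N -> D`_k = 0) ->
  (forall k, nr ((('X - x%:P) * D)`_k) <= e) -> nr x <= M -> 1 <= M -> 0 <= e ->
  forall k, nr D`_k <= m%:R * e * M ^+ m.
Proof.
move=> hD hE hx hM he.
have key : forall j k, (m <= k + j)%N -> nr D`_k <= j%:R * e * M ^+ j.
  elim=> [|j IHj] k hk.
    by rewrite addn0 in hk; rewrite hD // nr0 !mul0r.
  have hMj : 1 <= M ^+ j by exact: exprn_ege1.
  have hMj' : 1 <= M ^+ j.+1 by exact: exprn_ege1.
  have ha : 0 <= j%:R * e * M ^+ j.
    by rewrite !mulr_ge0 // ?ler0n // (le_trans ler01 hMj).
  have -> : j.+1%:R * e * M ^+ j.+1 = (j%:R * e * M ^+ j) * M + e * M ^+ j.+1.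
    by rewrite -natr1 exprSr; ring.
  move: ha; set a := j%:R * e * M ^+ j => ha.
  move: hMj'; set u := M ^+ j.+1 => hu.
  case: (leqP m (k + j)) => h.
    apply: le_trans (IHj k h) _; rewrite -/a; nra.
  have hc : D`_k = (('X - x%:P) * D)`_k.+1 + x * D`_k.+1.
    by rewrite mulrBl coefB coefXM coefCM /=; ring.
  have h2 : nr D`_k.+1 <= a by apply: IHj; rewrite addSnnS.
  have h3 := hE k.+1.
  rewrite hc; apply: le_trans (nrD _ _) _; rewrite nrM.
  have := nr_ge0 x; have := nr_ge0 (D`_k.+1).
  nra.
move=> k; apply: key; exact: leq_addl.
Qed.


Lemma coefXsubCM (x : C) (D : {poly C}) k :
  (('X - x%:P) * D)`_k = (if k is k'.+1 then D`_k' else 0) - x * D`_k.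
Proof. by rewrite mulrBl coefB coefXM coefCM; case: k. Qed.

Lemma monic_coef_hi (P Q : {poly C}) k N : P \is monic -> Q \is monic ->
  size P = N.+1 -> size Q = N.+1 -> (N <= k)%N -> P`_k = Q`_k.
Proof.
move=> mP mQ sP sQ hk; case: (ltngtP k N) => h.
- by have := leq_trans h hk; rewrite ltnn.
- by rewrite !nth_default ?sP ?sQ.
- have eP : P`_N = 1 by rewrite -(monicP mP) lead_coefE sP.
  have eQ : Q`_N = 1 by rewrite -(monicP mQ) lead_coefE sQ.
  by rewrite h eP eQ.
Qed.

Lemma RC m (c : 'I_m -> C) (eps : R) : 0 < eps -> exists2 delta : R, 0 < delta &
  forall Q : {poly C}, Q \is monic -> size Q = m.+1 ->
   (forall k, (k < m)%N -> nr (Q`_k - (\prod_(i < m) ('X - (c i)%:P))`_k) < delta) ->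
   exists d : 'I_m -> C, Q = \prod_(i < m) ('X - (d i)%:P) /\ forall i, nr (d i - c i) < eps.
Proof.
elim: m c eps => [|m IH] c eps he.
  exists 1 => // Q mQ sQ _; exists (fun _ => 0); split; last by case.
  rewrite big_ord0 (size1_polyC (eq_leq sQ)).
  by have := monicP mQ; rewrite lead_coefE sQ /= => ->.
set rho := c ord0; set c' := fun i => c (lift ord0 i).
set P0 := \prod_(i < m.+1) ('X - (c i)%:P).
set P0' := \prod_(i < m) ('X - (c' i)%:P).
have hP0 : P0 = ('X - rho%:P) * P0' by rewrite /P0 big_ord_recl.
have mP0 : P0 \is monic by exact: monic_prodF.
have sP0 : size P0 = m.+2 by exact: size_prodF.
have mP0' : P0' \is monic by exact: monic_prodF.
have sP0' : size P0' = m.+1 by exact: size_prodF.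
have [d' hd' IHd] := IH c' eps he.
set M := nr rho + 1.
set Bd := \sum_(k < m.+1) nr (P0'`_k).
set K := \sum_(k < m.+1) nr rho ^+ k.
set L := m.+1%:R * M ^+ m.
have hM : 1 <= M by rewrite /M lerDr nr_ge0.
have hBd : 0 <= Bd by apply: sumr_ge0 => k _; exact: nr_ge0.
have hK : 0 <= K by apply: sumr_ge0 => k _; rewrite exprn_ge0 // nr_ge0.
have hL : 0 < L by rewrite /L mulr_gt0 // ?ltr0Sn // exprn_gt0 // (lt_le_trans ltr01 hM).
have hB1 : 0 < Bd + 1 by lra.
have hK1 : 0 < K + 1 by lra.
have h2L : 0 < 2 * L by lra.
have h2LB : 0 < 2 * L * (Bd + 1) by rewrite mulr_gt0.
set eta := Num.min 1 (Num.min eps (d' / (2 * L * (Bd + 1)))).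
have heta0 : 0 < eta.
  by rewrite /eta !lt_min ltr01 he divr_gt0.
have heta1 : eta <= 1 by rewrite /eta ge_min lexx.
have heta2 : eta <= eps by rewrite /eta !ge_min lexx orbT.
have heta3 : eta * (2 * L * (Bd + 1)) <= d'.
  by rewrite -ler_pdivlMr // /eta !ge_min lexx !orbT.
set delta := Num.min (d' / (2 * L)) (eta ^+ m.+1 / (K + 1)).
have hd0 : 0 < delta by rewrite /delta lt_min !divr_gt0 ?exprn_gt0.
exists delta => //.
have hd1 : delta * (2 * L) <= d'.
  by rewrite -ler_pdivlMr // /delta ge_min lexx.
have hd2 : delta * (K + 1) <= eta ^+ m.+1.
  by rewrite -ler_pdivlMr // /delta ge_min lexx orbT.
move=> Q mQ sQ hQ.
have [r hr] := closed_field_poly_normal Q.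
rewrite (monicP mQ) scale1r in hr.
have sr : size r = m.+1.
  by have := congr1 (fun p : {poly C} => size p) hr; rewrite sQ size_prod_XsubC => -[].
have hQrho : nr Q.[rho] <= delta * K.
  have -> : Q.[rho] = (Q - P0).[rho].
    by rewrite hornerD hornerN hP0 hornerM hornerXsubC subrr mul0r subr0.
  rewrite (@horner_coef_wide _ m.+2); last first.
    by apply: leq_trans (size_polyD _ _) _; rewrite size_polyN sQ sP0 maxnn.
  rewrite big_ord_recr /= coefB (monic_coef_hi mQ mP0 sQ sP0 (leqnn _)) subrr mul0r addr0.
  apply: le_trans (nr_sum _ _) _; rewrite /K mulr_sumr; apply: ler_sum => k _.
  rewrite nrM nrX coefB; apply: ler_wpM2r; first by rewrite exprn_ge0 // nr_ge0.
  by apply: ltW; apply: hQ.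
have [s sr_in hs] : exists2 s, s \in r & nr (rho - s) < eta.
  apply/hasP; apply: contrapT => /negP hn.
  have : eta ^+ m.+1 <= nr Q.[rho].
    rewrite hr horner_prod nr_prod -sr.
    have -> : eta ^+ size r = \prod_(x <- r) eta.
      rewrite big_const_seq count_predT; elim: (size r) => [|k IHk] /=; first by rewrite expr0.
      by rewrite exprS IHk.
    rewrite big_seq [X in _ <= X]big_seq; apply: ler_prod => x xr.
    rewrite ltW //= hornerXsubC; move/hasPn: hn => /(_ x xr).
    by rewrite -leNgt.
  have : delta * K < eta ^+ m.+1.
    apply: lt_le_trans hd2; rewrite ltr_pM2l //; lra.
  move=> h1 h2; have := le_lt_trans (le_trans h2 hQrho) h1; by rewrite ltxx.
set r' := rem s r.
set Q' := \prod_(z <- r') ('X - z%:P).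
have hQQ' : Q = ('X - s%:P) * Q' by rewrite hr (perm_big _ (perm_to_rem sr_in)) big_cons.
have mQ' : Q' \is monic by exact: monic_prod_XsubC.
have sQ' : size Q' = m.+1 by rewrite size_prod_XsubC size_rem // sr.
set D := Q' - P0'.
have hE : ('X - s%:P) * D = Q - P0 - (rho - s)%:P * P0'.
  by rewrite /D hQQ' hP0 polyCB; ring.
have hP0'k : forall k, nr P0'`_k <= Bd.
  move=> k; case: (ltnP k m.+1) => hk.
    rewrite /Bd (bigD1 (Ordinal hk)) //= lerDl; apply: sumr_ge0 => i _; exact: nr_ge0.
  by rewrite nth_default ?sP0' // nr0.
have he0 : 0 <= delta + eta * Bd by rewrite addr_ge0 ?mulr_ge0 // ltW.
have hEk : forall k, nr ((('X - s%:P) * D)`_k) <= delta + eta * Bd.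
  move=> k; rewrite hE !coefB coefCM.
  case: (ltnP k m.+1) => hk.
    apply: le_trans (nrD _ _) _; rewrite nrN nrM; apply: lerD; first exact/ltW/hQ.
    apply: ler_pM; [exact: nr_ge0 | exact: nr_ge0 | exact/ltW | exact: hP0'k].
  rewrite (monic_coef_hi mQ mP0 sQ sP0 hk) subrr.
  by rewrite (nth_default _ (_ : size P0' <= k)%N) ?sP0' // mulr0 subr0 nr0.
have hDhi : forall k, (m <= k)%N -> D`_k = 0.
  by move=> k hk; rewrite /D coefB (monic_coef_hi mQ' mP0' sQ' sP0' hk) subrr.
have hs' : nr s <= M.
  have := nrD (s - rho) rho; rewrite subrK nrB /M => h; lra.
have hDk := Dbound hDhi hEk hs' hM he0.
have [d'' [hQ'' hd'']] : exists d, Q' = \prod_(i < m) ('X - (d i)%:P) /\ forall i, nr (d i - c' i) < eps.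
  apply: IHd => // k hk.
  rewrite -coefB -/D.
  apply: le_lt_trans (hDk k) _.
  move: he0; set e := delta + eta * Bd => he0.
  have hMm : 0 <= M ^+ m by rewrite exprn_ge0 // (le_trans ler01 hM).
  have heb : 0 <= e * M ^+ m by rewrite mulr_ge0.
  have hLe : 0 < L * eta by rewrite mulr_gt0.
  have h1 : m%:R * e * M ^+ m <= L * e.
    rewrite /L -natr1; nra.
  apply: le_lt_trans h1 _.
  rewrite /e; nra.
pose d := fun i : 'I_m.+1 => if unlift ord0 i is Some j then d'' j else s.
exists d; split.
  rewrite big_ord_recl hQQ' hQ'' /d unlift_none; congr (_ * _).
  by apply: eq_bigr => j _; rewrite liftK.
move=> i; rewrite /d; case: (unliftP ord0 i) => [j ->|->].
  exact: hd''.
rewrite ?unlift_none nrB -/rho; lra.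
Qed.

End NR.

Section PsiCont.
Variables (R : realType) (m : nat).
Local Notation C := (Cplx R).
Local Notation n := m.+2.

Lemma psi_cont : continuous (@psi R m).
Proof.
apply/quotient_continuous.
have -> : (@psi R m) \o \pi_(quotient_topology {eq_quot orbeq R n})%qT = @F R m.
  by apply: funext => p /=; exact: psi_pi.
apply/continuousP => U oU.
have [U' oU' hU'] : exists2 U', open U' & (val @^-1` U' : set (Cm0 R n)) = @piWP R n @^-1` U.
  have oU2 : open (@piWP R n @^-1` U) := oU.
  case: oU2 => U' oU' hU'; by exists U'.
suff : exists2 O : set (SP R n), open O & (val @^-1` O : set (SPo R n)) = @F R m @^-1` U.
  by case=> O oO hO; exists O.
exists [set x : SP R n | exists z, x = piSP z /\ U' (coeffs_a z) /\ coeffs_a z != 0].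
  have : open ((fun z : 'rV[C]_n => coeffs_a z) @^-1` (U' `&` ~` [set 0])).
    have := (continuousP _).1 (@coeffs_cont R n) _ (openI oU' (@nz_open R n.-1)); exact.
  suff -> : (fun z : 'rV[C]_n => coeffs_a z) @^-1` (U' `&` ~` [set 0]) =
    @piSP R n @^-1` [set x : SP R n | exists z, x = piSP z /\ U' (coeffs_a z) /\ coeffs_a z != 0].
    by [].
  apply/seteqP; split => z /=.
    by move=> [h1 h2]; exists z; split => //; split => //; apply/eqP.
  move=> [w [/piSP_eq hzw [h1 h2]]].
  by rewrite -(coeffs_perm hzw); split => //; apply/eqP.
apply/seteqP; split => -[x hx] /=.
  move=> [z [hxz [h1 h2]]]; subst x.
  rewrite (F_pi _ (mem_set (A := ~` [set 0]) (u := coeffs_a z) (elimN eqP h2))).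
  by have := congr1 (fun S => S (exist _ (coeffs_a z) (mem_set (A := ~` [set 0]) (u := coeffs_a z) (elimN eqP h2)))) hU'; rewrite /= => <-.
move=> hU; exists (repr x); split; first by rewrite reprSP.
split.
  have := congr1 (fun S => S (exist _ (coeffs_a (repr x)) (coeffs_nz (repr_nd (exist _ x hx))))) hU'.
  by rewrite /= => ->.
apply/eqP; exact: (set_mem (coeffs_nz (repr_nd (exist _ x hx)))).
Qed.
End PsiCont.

Section GCont.
Variables (R : realType) (m : nat).
Local Notation C := (Cplx R).
Local Notation n := m.+2.
Local Open Scope complex_scope.
Local Open Scope ring_scope.

Lemma pos_real (e : C) : 0 < e -> 0 < complex.Re e /\ e = (complex.Re e)%:C.
Proof.
case: e => a b; rewrite ltcE /= => /andP [/eqP -> ha]; split => //.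
Qed.

Lemma g_cont : continuous (@g R m).
Proof.
apply/quotient_continuous.
have -> : (@g R m) \o \pi_(quotient_topology {eq_quot weq R n})%qT = @g0 R m.
  by apply: funext => a /=; exact: g_pi.
apply/continuousP => V oV.
have oV2 : open (@piConf R n @^-1` V) := oV.
case: oV2 => O oO hO.
have oW : open (@piSP R n @^-1` O) := oO.
suff : exists2 V' : set 'rV[C]_m.+1, open V' & (val @^-1` V' : set (Cm0 R n)) = @g0 R m @^-1` V.
  by case=> V' oV' hV'; exists V'.
exists [set a | exists ha : a \in ~` [set 0], V (@g0 R m (exist _ a ha))]; last first.
  apply/seteqP; split => -[a ha] /=.
    by move=> [ha' hv]; rewrite (@exist_eq _ _ a a ha ha' (erefl a)).
  by move=> hv; exists ha.
rewrite openE => a0 [ha0 hV0].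
have hW0 : (@piSP R n @^-1` O) (rt a0).
  have : (@piConf R n @^-1` V) (exist _ (piSP (rt a0)) (rt_nd ha0)) := hV0.
  by rewrite -hO.
move: oW; rewrite openE => /(_ _ hW0) /nbhs_ballP [eps heps hball].
have [hepsR hepsE] := pos_real heps.
have [delta hdelta hRC] := RC (fun i => rt a0 0 i) hepsR.
have N1 : nbhs a0 (ball a0 delta%:C) by apply: nbhsx_ballx; rewrite ltcR.
have N2 : nbhs a0 (~` [set 0]).
  by have := @nz_open R m.+1; rewrite openE; apply; exact: set_mem.
apply: filterS (filterI N1 N2) => a [hba hna].
have ha : a \in ~` [set 0] := mem_set hna.
exists ha.
have [d [hd hdc]] : exists d : 'I_n -> C, Pa a = \prod_(i < n) ('X - (d i)%:P) /\
    forall i, nr (d i - rt a0 0 i) < complex.Re eps.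
  apply: hRC; [exact: Pa_monic | exact: Pa_size |] => k hk.
  have -> : \prod_(i < n) ('X - (rt a0 0 i)%:P) = Pa a0 by exact: prodX_rt.
  case: (ltnP k m.+1) => hk1.
    rewrite !(Pa_coefS _ (Ordinal hk1)) nrB -nr_lt; exact: (hba.2 0 (Ordinal hk1)).
  by rewrite !Pa_coef_ge // subrr nr0.
set z : 'rV[C]_n := \row_i d i.
have hz : (@piSP R n @^-1` O) z.
  apply: hball; split => // i j; rewrite ord1 /ball /= !mxE hepsE nr_lt nrB.
  by have := hdc j; rewrite !mxE.
have hperm : permrel (rt a) z.
  apply: prodX_perm; rewrite prodX_rt hd /prodX; apply: eq_bigr => k _; by rewrite mxE.
have e1 : piSP (rt a) = piSP z by apply/piSP_eq.
have : (@piConf R n @^-1` V) (exist _ (piSP (rt a)) (rt_nd ha)).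
  have hO' : O (piSP (rt a)) by rewrite e1; exact: hz.
  by rewrite -hO.
by [].
Qed.

End GCont.

Theorem mainTheorem3 (R : realType) (n : nat) (hn : (2 <= n)%N) :
  (forall z : 'rV[Cplx R]_n,
      piSP z \in ~` @SPdiag R n -> coeffs_a z \in ~` [set 0]) /\
  exists psi : ConfQuot R n -> WP R n,
    (forall (z : 'rV[Cplx R]_n) (hz : piSP z \in ~` @SPdiag R n)
            (ha : coeffs_a z \in ~` [set 0]),
        psi (piConf (exist _ (piSP z) hz)) = piWP (exist _ (coeffs_a z) ha))
    /\ is_homeomorphism psi.
Proof.
case: n hn => [|[|m]] // hn.
split; first by move=> z; exact: coeffs_nz.
exists (@psi R m); split.
  by move=> z hz ha; rewrite psi_pi; exact: F_pi.
split; first exact: psi_cont.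
exists (@g R m); split; [exact: g_cont | exact: g_psi | exact: psi_g].
Qed.
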